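(* Let $n\ge0$ and let $(\eta,\xi)$ be an $n$-Lie-isoclinism from $\mathfrak g_1$ to $\mathfrak g_2$. Let $\mathcal K=\{(g,h)\in\mathfrak g_1\oplus\mathfrak g_2:\eta(g+\mathcal Z_n^{\mathsf{Lie}}(\mathfrak g_1))=h+\mathcal Z_n^{\mathsf{Lie}}(\mathfrak g_2)\}$, $Z_{\mathfrak g_1}=\{(g,0):g\in\mathcal Z_n^{\mathsf{Lie}}(\mathfrak g_1)\}$, $Z_{\mathfrak g_2}=\{(0,h):h\in\mathcal Z_n^{\mathsf{Lie}}(\mathfrak g_2)\}$. Then: (a) $\mathcal K$ is a subalgebra of $\mathfrak g_1\oplus\mathfrak g_2$; (b) $\gamma_{n+1}^{\mathsf{Lie}}(\mathcal K)=\{(g,\xi(g)):g\in\gamma_{n+1}^{\mathsf{Lie}}(\mathfrak g_1)\}$; (c) $Z_{\mathfrak g_1}$ and $Z_{\mathfrak g_2}$ are two-sided ideals of $\mathcal K$ with $Z_{\mathfrak g_i}\cap\gamma_{n+1}^{\mathsf{Lie}}(\mathcal K)=0$ for $i=1,2$; (d) for $\{i,j\}=\{1,2\}$, $\mathfrak g_i\cong\mathcal K/Z_{\mathfrak g_j}$ and $\mathcal K/Z_{\mathfrak g_j}\sim_n\mathcal K$.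
   Context: All Leibniz algebras are over a field $\mathbb{K}$ with $\frac12\in\mathbb{K}$. A Leibniz algebra is a vector space $\mathfrak g$ with a bilinear bracket $[-,-]$ satisfying $[x,[y,z]]=[[x,y],z]-[[x,z],y]$. For $x,y\in\mathfrak g$ put $[x,y]_{lie}=[x,y]+[y,x]$. For two-sided ideals $\mathfrak m,\mathfrak n$ of $\mathfrak g$, $[\mathfrak m,\mathfrak n]_{\mathsf{Lie}}$ denotes the two-sided ideal of $\mathfrak g$ generated by $\{[m,x]_{lie}: m\in\mathfrak m, x\in\mathfrak n\}$. Lower Lie-central series: $\gamma_1^{\mathsf{Lie}}(\mathfrak g)=\mathfrak g$, $\gamma_i^{\mathsf{Lie}}(\mathfrak g)=[\gamma_{i-1}^{\mathsf{Lie}}(\mathfrak g),\mathfrak g]_{\mathsf{Lie}}$ for $i\ge2$. Upper Lie-central series: $\mathcal Z_0^{\mathsf{Lie}}(\mathfrak g)=0$, $\mathcal Z_i^{\mathsf{Lie}}(\mathfrak g)=\{x\in\mathfrak g:[x,y]_{lie}\in\mathcal Z_{i-1}^{\mathsf{Lie}}(\mathfrak g)\ \text{for all } y\in\mathfrak g\}$ for $i\ge1$. For $n\ge0$, Leibniz algebras $\mathfrak g_1,\mathfrak g_2$ are $n$-Lie-isoclinic, written $\mathfrak g_1\sim_n\mathfrak g_2$, if there exist Leibniz algebra isomorphisms $\eta:\mathfrak g_1/\mathcal Z_n^{\mathsf{Lie}}(\mathfrak g_1)\to\mathfrak g_2/\mathcal Z_n^{\mathsf{Lie}}(\mathfrak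 g_2)$ and $\xi:\gamma_{n+1}^{\mathsf{Lie}}(\mathfrak g_1)\to\gamma_{n+1}^{\mathsf{Lie}}(\mathfrak g_2)$ such that $\xi([\cdots[[x_1,x_2]_{lie},x_3]_{lie},\ldots,x_{n+1}]_{lie})=[\cdots[[y_1,y_2]_{lie},y_3]_{lie},\ldots,y_{n+1}]_{lie}$ whenever $x_i\in\mathfrak g_1$, $y_i\in\mathfrak g_2$ satisfy $\eta(x_i+\mathcal Z_n^{\mathsf{Lie}}(\mathfrak g_1))=y_i+\mathcal Z_n^{\mathsf{Lie}}(\mathfrak g_2)$ for $i=1,\ldots,n+1$; $(\eta,\xi)$ is then called an $n$-Lie-isoclinism from $\mathfrak g_1$ to $\mathfrak g_2$. *)

(* Defs.v *)
(* Leibniz algebras over a field K are encoded by an explicit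
   record (carrier, K-vector-space operations, bracket, axioms), because
   general (possibly infinite-dimensional) Leibniz algebras, their subalgebras,
   direct sums and quotients are not available in MathComp. *)
From HB Require Import structures.
From mathcomp Require Import all_boot all_algebra.
From Stdlib Require Import ClassicalEpsilon FunctionalExtensionality
  PropExtensionality ProofIrrelevance.
Set Implicit Arguments. Unset Strict Implicit. Unset Printing Implicit Defensive.
Import GRing.Theory.
Local Open Scope ring_scope.

(* A Leibniz algebra over K: a K-vector space (additive inverse written as
   scaling by -1) with a bilinear bracket satisfying
   [x,[y,z]] = [[x,y],z] - [[x,z],y]. *)
Record leibniz (K : fieldType) := Leibniz {
  lcar :> Type;
  lzero : lcar;
  ladd : lcar -> lcar -> lcar;
  lscale : K -> lcar -> lcar;
  lbr : lcar -> lcar -> lcar;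
  laddA : forall x y z, ladd x (ladd y z) = ladd (ladd x y) z;
  laddC : forall x y, ladd x y = ladd y x;
  ladd0 : forall x, ladd lzero x = x;
  laddN : forall x, ladd x (lscale (-1) x) = lzero;
  lscale1 : forall x, lscale 1 x = x;
  lscaleA : forall a b x, lscale a (lscale b x) = lscale (a * b) x;
  lscaleDr : forall a x y, lscale a (ladd x y) = ladd (lscale a x) (lscale a y);
  lscaleDl : forall a b x, lscale (a + b) x = ladd (lscale a x) (lscale b x);
  lbrDl : forall x y z, lbr (ladd x y) z = ladd (lbr x z) (lbr y z);
  lbrZl : forall a x y, lbr (lscale a x) y = lscale a (lbr x y);
  lbrDr : forall x y z, lbr x (ladd y z) = ladd (lbr x y) (lbr x z);
  lbrZr : forall a x y, lbr x (lscale a y) = lscale a (lbr x y);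
  lleibniz : forall x y z,
    lbr x (lbr y z) = ladd (lbr (lbr x y) z) (lscale (-1) (lbr (lbr x z) y))
}.
Arguments lzero {K L} : rename.
Arguments ladd {K L} : rename.
Arguments lscale {K L} : rename.
Arguments lbr {K L} : rename.

Section Basics.
Variables (K : fieldType) (L : leibniz K).
Implicit Types (x y z : L) (S X M N : L -> Prop).

Definition lsub x y := ladd x (lscale (-1) y).

Definition subspace S :=
  [/\ S lzero, (forall x y, S x -> S y -> S (ladd x y))
    & (forall a x, S x -> S (lscale a x))].
Definition subalgebra S := subspace S /\ (forall x y, S x -> S y -> S (lbr x y)).
Definition ideal S :=
  subspace S /\ (forall x y, S x -> S (lbr x y) /\ S (lbr y x)).

Definition subalg_gen X x := forall S, subalgebra S -> (forall y, X y -> S y) -> S x.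
Definition ideal_gen X x := forall S, ideal S -> (forall y, X y -> S y) -> S x.

Definition lie x y := ladd (lbr x y) (lbr y x).

Definition lieComm M N :=
  ideal_gen (fun z => exists m x, [/\ M m, N x & z = lie m x]).

(* gamma_aux k = gamma_{k+1}^Lie *)
Fixpoint gamma_aux (k : nat) : L -> Prop :=
  match k with
  | 0 => fun _ => True
  | k'.+1 => lieComm (gamma_aux k') (fun _ => True)
  end.
(* lower Lie-central series, gammaLie i = gamma_i^Lie for i >= 1 *)
Definition gammaLie (i : nat) := gamma_aux i.-1.

Fixpoint ZLie (i : nat) : L -> Prop :=
  match i with
  | 0 => fun x => x = lzero
  | i'.+1 => fun x => forall y, ZLie i' (lie x y)
  end.

Fixpoint commIter (x : nat -> L) (k : nat) : L :=
  match k with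
  | 0 => x 0%N
  | k'.+1 => lie (commIter x k') (x k)
  end.

Lemma ladd0r x : ladd x lzero = x.
Proof. by rewrite laddC ladd0. Qed.

Lemma laddACA (a b c d : L) : ladd (ladd a b) (ladd c d) = ladd (ladd a c) (ladd b d).
Proof.
rewrite -!laddA; congr (ladd a _).
by rewrite !laddA (laddC b c).
Qed.

Lemma lsub_add x y x' y' : lsub (ladd x y) (ladd x' y') = ladd (lsub x x') (lsub y y').
Proof. by rewrite /lsub lscaleDr laddACA. Qed.

Lemma lsub_scale a x x' : lsub (lscale a x) (lscale a x') = lscale a (lsub x x').
Proof. by rewrite /lsub lscaleDr !lscaleA mulrC. Qed.

Lemma lsub_trans x y z : ladd (lsub x y) (lsub y z) = lsub x z.
Proof.
rewrite /lsub -laddA; congr (ladd x _).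
by rewrite laddA (laddC _ y) laddN ladd0.
Qed.

Lemma lsub_opp x y : lscale (-1) (lsub x y) = lsub y x.
Proof. by rewrite /lsub lscaleDr lscaleA mulrNN mulr1 lscale1 laddC. Qed.

Lemma lsubrr x : lsub x x = lzero.
Proof. exact: laddN. Qed.

Lemma lbr_sub_l x y z : lsub (lbr x z) (lbr y z) = lbr (lsub x y) z.
Proof. by rewrite /lsub lbrDl lbrZl. Qed.

Lemma lbr_sub_r x y z : lsub (lbr z x) (lbr z y) = lbr z (lsub x y).
Proof. by rewrite /lsub lbrDr lbrZr. Qed.

Lemma ideal_gen_ideal X : ideal (ideal_gen X).
Proof.
split; first split.
- by move=> S [[? _ _] _] _.
- move=> x y hx hy S hS hXS; have [[_ hA _] _] := hS.
  exact: hA (hx S hS hXS) (hy S hS hXS).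
- move=> a x hx S hS hXS; have [[_ _ hZ] _] := hS; exact: hZ (hx S hS hXS).
- move=> x y hx; split=> S hS hXS; have [_ hB] := hS;
    by have [] := hB x y (hx S hS hXS).
Qed.

Lemma subalg_gen_subalgebra X : subalgebra (subalg_gen X).
Proof.
split; first split.
- by move=> S [[? _ _] _] _.
- move=> x y hx hy S hS hXS; have [[_ hA _] _] := hS.
  exact: hA (hx S hS hXS) (hy S hS hXS).
- move=> a x hx S hS hXS; have [[_ _ hZ] _] := hS; exact: hZ (hx S hS hXS).
- move=> x y hx hy S hS hXS; have [_ hB] := hS.
  exact: hB _ _ (hx S hS hXS) (hy S hS hXS).
Qed.

End Basics.

Arguments subspace {K L}.
Arguments subalgebra {K L}.
Arguments ideal {K L}.
Arguments subalg_gen {K L}.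
Arguments ideal_gen {K L}.
Arguments lie {K L}.
Arguments gammaLie {K} L i.
Arguments ZLie {K} L i.
Arguments commIter {K L}.

Definition is_hom (K : fieldType) (L1 L2 : leibniz K) (f : L1 -> L2) :=
  [/\ forall x y, f (ladd x y) = ladd (f x) (f y),
      forall a x, f (lscale a x) = lscale a (f x)
    & forall x y, f (lbr x y) = lbr (f x) (f y)].
Definition is_iso (K : fieldType) (L1 L2 : leibniz K) (f : L1 -> L2) :=
  is_hom f /\ bijective f.
Definition isomorphic (K : fieldType) (L1 L2 : leibniz K) :=
  exists f : L1 -> L2, is_iso f.

Section DSum.
Variables (K : fieldType) (L1 L2 : leibniz K).
Definition dcar := (lcar L1 * lcar L2)%type.
Definition dzero : dcar := (lzero, lzero).
Definition dadd (p q : dcar) : dcar := (ladd p.1 q.1, ladd p.2 q.2).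
Definition dscale (a : K) (p : dcar) : dcar := (lscale a p.1, lscale a p.2).
Definition dbr (p q : dcar) : dcar := (lbr p.1 q.1, lbr p.2 q.2).

Definition dsum : leibniz K.
Proof.
refine (@Leibniz K dcar dzero dadd dscale dbr _ _ _ _ _ _ _ _ _ _ _ _ _).
- by move=> [? ?] [? ?] [? ?]; rewrite /dadd /= !laddA.
- by move=> [? ?] [? ?]; rewrite /dadd /=; congr pair; apply: laddC.
- by move=> [? ?]; rewrite /dadd /= !ladd0.
- by move=> [? ?]; rewrite /dadd /dscale /= !laddN.
- by move=> [? ?]; rewrite /dscale /= !lscale1.
- by move=> a b [? ?]; rewrite /dscale /= !lscaleA.
- by move=> a [? ?] [? ?]; rewrite /dscale /dadd /= !lscaleDr.
- by move=> a b [? ?]; rewrite /dscale /dadd /= !lscaleDl.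
- by move=> [? ?] [? ?] [? ?]; rewrite /dbr /dadd /= !lbrDl.
- by move=> a [? ?] [? ?]; rewrite /dbr /dscale /= !lbrZl.
- by move=> [? ?] [? ?] [? ?]; rewrite /dbr /dadd /= !lbrDr.
- by move=> a [? ?] [? ?]; rewrite /dbr /dscale /= !lbrZr.
- by move=> [? ?] [? ?] [? ?]; rewrite /dbr /dadd /dscale /= !lleibniz.
Defined.
End DSum.

Section Sub.
Variables (K : fieldType) (L : leibniz K) (S : L -> Prop).
Definition scar := {x : L | subalg_gen S x}.

Lemma sinj (x y : scar) : sval x = sval y -> x = y.
Proof.
case: x y => [x hx] [y hy] /= e; subst y.
by rewrite (proof_irrelevance _ hx hy).
Qed.

Let hS := subalg_gen_subalgebra S.
Definition szero : scar := exist _ lzero (let: conj (And3 h _ _) _ := hS in h).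
Definition sadd (x y : scar) : scar :=
  exist _ (ladd (sval x) (sval y))
    (let: conj (And3 _ h _) _ := hS in h _ _ (proj2_sig x) (proj2_sig y)).
Definition sscale a (x : scar) : scar :=
  exist _ (lscale a (sval x))
    (let: conj (And3 _ _ h) _ := hS in h a _ (proj2_sig x)).
Definition sbr (x y : scar) : scar :=
  exist _ (lbr (sval x) (sval y))
    (let: conj _ h := hS in h _ _ (proj2_sig x) (proj2_sig y)).

Definition sub : leibniz K.
Proof.
refine (@Leibniz K scar szero sadd sscale sbr _ _ _ _ _ _ _ _ _ _ _ _ _);
  intros; apply: sinj => /=.
- exact: laddA.
- exact: laddC.
- exact: ladd0.
- exact: laddN.
- exact: lscale1.
- exact: lscaleA.
- exact: lscaleDr.
- exact: lscaleDl.
- exact: lbrDl.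
- exact: lbrZl.
- exact: lbrDr.
- exact: lbrZr.
- exact: lleibniz.
Defined.
End Sub.

Section Quot.
Variables (K : fieldType) (L : leibniz K) (I : L -> Prop).
Let J := ideal_gen I.
Let hJ : ideal J := ideal_gen_ideal I.

Definition qcoset (x : L) : L -> Prop := fun y => J (lsub y x).
Definition qcar := {A : L -> Prop | exists x, A = qcoset x}.
Definition cls (x : L) : qcar := exist _ (qcoset x) (ex_intro _ x erefl).
Definition rep (A : qcar) : L :=
  proj1_sig (constructive_indefinite_description _ (proj2_sig A)).

Lemma qinj (A B : qcar) : sval A = sval B -> A = B.
Proof.
case: A B => [A hA] [B hB] /= e; subst B.
by rewrite (proof_irrelevance _ hA hB).
Qed.

Lemma repK A : cls (rep A) = A.
Proof.
apply: qinj => /=; rewrite /rep.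
by case: (constructive_indefinite_description _ _) => x /= ->.
Qed.

Lemma clsP A : exists x, A = cls x.
Proof. by exists (rep A); rewrite repK. Qed.

Definition eqm x y := J (lsub x y).

Lemma eqm_refl x : eqm x x.
Proof. by rewrite /eqm lsubrr; case: hJ => -[]. Qed.

Lemma eqm_sym x y : eqm x y -> eqm y x.
Proof. by rewrite /eqm -(lsub_opp x y); case: hJ => -[_ _ h] _ /h. Qed.

Lemma eqm_trans x y z : eqm x y -> eqm y z -> eqm x z.
Proof. by rewrite /eqm -(lsub_trans x y z); case: hJ => -[_ h _] _; apply: h. Qed.

Lemma cls_eq x y : eqm x y -> cls x = cls y.
Proof.
move=> e; apply: qinj => /=; apply: functional_extensionality => z.
apply: propositional_extensionality; rewrite /qcoset; split => h.
- exact: eqm_trans h e.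
- exact: eqm_trans h (eqm_sym e).
Qed.

Lemma eqm_rep x : eqm (rep (cls x)) x.
Proof.
have := f_equal sval (repK (cls x)) => /= e.
have := eqm_refl (rep (cls x)); rewrite /eqm -/(qcoset _ _).
by rewrite e.
Qed.

Lemma eqm_add x x' y y' : eqm x x' -> eqm y y' -> eqm (ladd x y) (ladd x' y').
Proof. by rewrite /eqm lsub_add; case: hJ => -[_ h _] _; apply: h. Qed.

Lemma eqm_scale a x x' : eqm x x' -> eqm (lscale a x) (lscale a x').
Proof. by rewrite /eqm lsub_scale; case: hJ => -[_ _ h] _; apply: h. Qed.

Lemma eqm_br x x' y y' : eqm x x' -> eqm y y' -> eqm (lbr x y) (lbr x' y').
Proof.
move=> ex ey; apply: (@eqm_trans _ (lbr x' y)).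
- by rewrite /eqm lbr_sub_l; case: hJ => _ h; case: (h _ y ex).
- by rewrite /eqm lbr_sub_r; case: hJ => _ h; case: (h _ x' ey).
Qed.

Definition qzero : qcar := cls lzero.
Definition qadd (A B : qcar) : qcar := cls (ladd (rep A) (rep B)).
Definition qscale a (A : qcar) : qcar := cls (lscale a (rep A)).
Definition qbr (A B : qcar) : qcar := cls (lbr (rep A) (rep B)).

Lemma qaddE x y : qadd (cls x) (cls y) = cls (ladd x y).
Proof. by apply: cls_eq; apply: eqm_add; apply: eqm_rep. Qed.
Lemma qscaleE a x : qscale a (cls x) = cls (lscale a x).
Proof. by apply: cls_eq; apply: eqm_scale; apply: eqm_rep. Qed.
Lemma qbrE x y : qbr (cls x) (cls y) = cls (lbr x y).
Proof. by apply: cls_eq; apply: eqm_br; apply: eqm_rep. Qed.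

Definition quot : leibniz K.
Proof.
refine (@Leibniz K qcar qzero qadd qscale qbr _ _ _ _ _ _ _ _ _ _ _ _ _).
- move=> A B C; case: (clsP A) => a ->; case: (clsP B) => b ->.
  by case: (clsP C) => c ->; rewrite !qaddE laddA.
- by move=> A B; case: (clsP A) => a ->; case: (clsP B) => b ->; rewrite !qaddE laddC.
- by move=> A; case: (clsP A) => a ->; rewrite /qzero qaddE ladd0.
- by move=> A; case: (clsP A) => a ->; rewrite !(qaddE, qscaleE, qbrE) laddN.
- by move=> A; case: (clsP A) => a ->; rewrite qscaleE lscale1.
- by move=> s t A; case: (clsP A) => a ->; rewrite !qscaleE lscaleA.
- move=> s A B; case: (clsP A) => a ->; case: (clsP B) => b ->.
  by rewrite !(qaddE, qscaleE, qbrE) lscaleDr.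
- by move=> s t A; case: (clsP A) => a ->; rewrite !(qaddE, qscaleE, qbrE) lscaleDl.
- move=> A B C; case: (clsP A) => a ->; case: (clsP B) => b ->.
  by case: (clsP C) => c ->; rewrite !(qaddE, qscaleE, qbrE) lbrDl.
- by move=> s A B; case: (clsP A) => a ->; case: (clsP B) => b ->;
    rewrite !(qaddE, qscaleE, qbrE) lbrZl.
- move=> A B C; case: (clsP A) => a ->; case: (clsP B) => b ->.
  by case: (clsP C) => c ->; rewrite !(qaddE, qscaleE, qbrE) lbrDr.
- by move=> s A B; case: (clsP A) => a ->; case: (clsP B) => b ->;
    rewrite !(qaddE, qscaleE, qbrE) lbrZr.
- move=> A B C; case: (clsP A) => a ->; case: (clsP B) => b ->.
  case: (clsP C) => c ->.
  by rewrite !(qaddE, qscaleE, qbrE) lleibniz.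
Defined.

Definition qproj (x : L) : quot := cls x.
End Quot.

Arguments qproj {K L} I x.

(* eta : g1 / Z_n^Lie(g1) -> g2 / Z_n^Lie(g2),
   xi  : gamma_{n+1}^Lie(g1) -> gamma_{n+1}^Lie(g2);
   the families x_1..x_{n+1}, y_1..y_{n+1} are indexed by 0..n. *)
Definition n_lie_isoclinism (K : fieldType) (n : nat) (L1 L2 : leibniz K)
  (eta : quot (ZLie L1 n) -> quot (ZLie L2 n))
  (xi : sub (gammaLie L1 n.+1) -> sub (gammaLie L2 n.+1)) :=
  [/\ is_iso eta, is_iso xi &
    forall (x : nat -> L1) (y : nat -> L2),
      (forall i, (i <= n)%N -> eta (qproj (ZLie L1 n) (x i)) = qproj (ZLie L2 n) (y i)) ->
      forall c : sub (gammaLie L1 n.+1),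
        sval c = commIter x n -> sval (xi c) = commIter y n].

Definition n_lie_isoclinic (K : fieldType) (n : nat) (L1 L2 : leibniz K) :=
  exists eta xi, @n_lie_isoclinism K n L1 L2 eta xi.

(* Main.v *)
Set Warnings "-notation-overridden,-ambiguous-paths,-notation-incompatible-prefix".
Require Import Defs.
From HB Require Import structures.
From mathcomp Require Import all_boot all_algebra.
From Stdlib Require Import ClassicalEpsilon FunctionalExtensionality
  PropExtensionality ProofIrrelevance.
Set Implicit Arguments. Unset Strict Implicit. Unset Printing Implicit Defensive.
Import GRing.Theory.
Local Open Scope ring_scope.

Section Alg.
Variables (K : fieldType) (L : leibniz K).
Implicit Types (x y z a b u v w : L) (S : L -> Prop).

Lemma laddNl x : ladd (lscale (-1) x) x = lzero.
Proof. by rewrite laddC laddN. Qed.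

Lemma ladd_cancel x y z : ladd x y = ladd x z -> y = z.
Proof.
move=> h; rewrite -(ladd0 y) -(ladd0 z) -(laddNl x) -!laddA h //.
Qed.

Lemma lscale0r (c : K) : lscale c (lzero : L) = lzero.
Proof.
apply: (@ladd_cancel (lscale c lzero)); rewrite -lscaleDr ladd0 ladd0r //.
Qed.

Lemma lscale0l x : lscale 0 x = lzero.
Proof.
apply: (@ladd_cancel (lscale 0 x)); rewrite -lscaleDl addr0 ladd0r //.
Qed.

Lemma lbr0l y : lbr (lzero : L) y = lzero.
Proof. apply: (@ladd_cancel (lbr lzero y)); rewrite -lbrDl ladd0 ladd0r //. Qed.

Lemma lbr0r y : lbr y (lzero : L) = lzero.
Proof. apply: (@ladd_cancel (lbr y lzero)); rewrite -lbrDr ladd0 ladd0r //. Qed.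

Lemma lie0l y : lie (lzero : L) y = lzero.
Proof. by rewrite /lie lbr0l lbr0r ladd0. Qed.

Lemma lieC x y : lie x y = lie y x.
Proof. exact: laddC. Qed.

Lemma lie0r y : lie y (lzero : L) = lzero.
Proof. by rewrite lieC lie0l. Qed.

Lemma lieDl x y z : lie (ladd x y) z = ladd (lie x z) (lie y z).
Proof. by rewrite /lie lbrDl lbrDr laddACA. Qed.

Lemma lieZl c x y : lie (lscale c x) y = lscale c (lie x y).
Proof. by rewrite /lie lbrZl lbrZr lscaleDr. Qed.

Lemma lbr_lie z a b : lbr z (lie a b) = lzero.
Proof.
rewrite /lie lbrDr !lleibniz.
set P := lbr (lbr z a) b; set Q := lbr (lbr z b) a.
by rewrite [ladd Q _]laddC laddACA laddN laddNl ladd0.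
Qed.

Lemma leib2 x y z : lbr (lbr x y) z = ladd (lbr x (lbr y z)) (lbr (lbr x z) y).
Proof. by rewrite lleibniz -laddA laddNl ladd0r. Qed.

Lemma lbr_lie_l a b z : lbr (lie a b) z = lie (lie a b) z.
Proof. by rewrite {2}/lie lbr_lie ladd0r. Qed.

Lemma lie_jac a b z :
  lie (lie a b) z = ladd (lie a (lbr b z)) (lie (lbr a z) b).
Proof.
rewrite -lbr_lie_l {1}/lie lbrDl (leib2 a b z) (leib2 b a z) /lie.
by rewrite [ladd (lbr b _) _]laddC laddACA.
Qed.

Lemma lsub0 x y : lsub x y = lzero -> x = y.
Proof.
move=> h; apply: (@ladd_cancel (lscale (-1) y)).
by rewrite laddNl laddC -h.
Qed.

Lemma lsubr0 x : lsub x lzero = x.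
Proof. by rewrite /lsub lscale0r ladd0r. Qed.

Lemma subspace_sub S x y : subspace S -> S x -> S y -> S (lsub x y).
Proof. by case=> _ hA hZ hx hy; apply: hA => //; apply: hZ. Qed.

Lemma subspace_cancel S v w u : subspace S -> S u -> S v -> ladd v w = u -> S w.
Proof.
move=> hS hu hv e.
have -> : w = ladd (lscale (-1) v) u by rewrite -e laddA laddNl ladd0.
by case: hS => _ hA hZ; apply: hA => //; apply: hZ.
Qed.

Lemma ideal_gen_id S x : ideal S -> ideal_gen S x -> S x.
Proof. by move=> hS h; apply: h. Qed.

Lemma ideal_gen_in S x : S x -> ideal_gen S x.
Proof. by move=> hx T _ h; apply: h. Qed.

Lemma subalg_gen_id S x : subalgebra S -> subalg_gen S x -> S x.
Proof. by move=> hS h; apply: h. Qed.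

Lemma subalg_gen_in S x : S x -> subalg_gen S x.
Proof. by move=> hx T _ h; apply: h. Qed.

Lemma ideal_subalg S : ideal S -> subalgebra S.
Proof. by case=> h1 h2; split=> // x y hx _; case: (h2 x y hx). Qed.

Lemma commIter_ext (y y' : nat -> L) k :
  (forall i, (i <= k)%N -> y i = y' i) -> commIter y k = commIter y' k.
Proof.
elim: k => [|k IH] h /=; first exact: h.
by rewrite IH ?h // => i hi; apply: h; apply: leqW.
Qed.


Lemma gamma_subalg k : subalgebra (@gamma_aux _ L k).
Proof.
case: k => [|k]; first by split; first split.
exact/ideal_subalg/ideal_gen_ideal.
Qed.

Lemma gamma_subspace k : subspace (@gamma_aux _ L k).
Proof. by case: (gamma_subalg k). Qed.

Lemma commIter_gamma (y : nat -> L) k : gamma_aux k (commIter y k).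
Proof.
elim: k => [|k IH] //=; apply: ideal_gen_in.
by exists (commIter y k), (y k.+1).
Qed.

Inductive spanC (k : nat) : L -> Prop :=
| spC_it (y : nat -> L) : spanC k (commIter y k)
| spC_0 : spanC k lzero
| spC_add x y : spanC k x -> spanC k y -> spanC k (ladd x y)
| spC_scale c x : spanC k x -> spanC k (lscale c x).

Lemma spanC_gamma k x : spanC k x -> gamma_aux k x.
Proof.
have [h0 hA hZ] := gamma_subspace k.
elim=> {x} [y||x y _ hx _ hy|c x _ hx]; [exact: commIter_gamma|exact: h0|exact: hA|exact: hZ].
Qed.

Lemma spanC_lie k m w : spanC k m -> spanC k.+1 (lie m w).
Proof.
elim=> {m} [y||x y _ hx _ hy|c x _ hx].
- have -> : lie (commIter y k) w =
     commIter (fun i => if i == k.+1 then w else y i) k.+1.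
    rewrite /= eqxx; congr lie; apply: commIter_ext => i hi.
    by rewrite ifN // neq_ltn ltnS hi.
  exact: spC_it.
- by rewrite lie0l; apply: spC_0.
- by rewrite lieDl; apply: spC_add.
- by rewrite lieZl; apply: spC_scale.
Qed.

Lemma spanC_lbr0 k x z : spanC k.+1 x -> lbr z x = lzero.
Proof.
elim=> {x} [y||x y _ hx _ hy|c x _ hx].
- exact: lbr_lie.
- exact: lbr0r.
- by rewrite lbrDr hx hy ladd0.
- by rewrite lbrZr hx lscale0r.
Qed.

Lemma spanC_lbr_it k (y : nat -> L) z : spanC k (lbr (commIter y k) z).
Proof.
elim: k y => [|k IH] y /=.
  by apply: (spC_it 0 (fun _ => lbr (y 0%N) z)).
rewrite lbr_lie_l lie_jac.
apply: spC_add; last exact: spanC_lie.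
have -> : lie (commIter y k) (lbr (y k.+1) z) =
     commIter (fun i => if i == k.+1 then lbr (y k.+1) z else y i) k.+1.
  rewrite /= eqxx; congr lie; apply: commIter_ext => i hi.
  by rewrite ifN // neq_ltn ltnS hi.
exact: spC_it.
Qed.

Lemma spanC_lbr k x z : spanC k x -> spanC k (lbr x z).
Proof.
elim=> {x} [y||x y _ hx _ hy|c x _ hx].
- exact: spanC_lbr_it.
- by rewrite lbr0l; apply: spC_0.
- by rewrite lbrDl; apply: spC_add.
- by rewrite lbrZl; apply: spC_scale.
Qed.

Lemma spanC_ideal k : ideal (spanC k.+1).
Proof.
split; first split.
- exact: spC_0.
- exact: spC_add.
- exact: spC_scale.
move=> x z hx; split; first exact: spanC_lbr.
by rewrite (spanC_lbr0 z hx); apply: spC_0.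
Qed.

Lemma gamma_spanC k x : gamma_aux k x -> spanC k x.
Proof.
elim: k x => [|k IH] x /=.
  by move=> _; apply: (spC_it 0 (fun _ => x)).
move=> h; apply: h; first exact: spanC_ideal.
by move=> _ [m [w [hm _ ->]]]; apply: spanC_lie; apply: IH.
Qed.

Lemma ZLie_subspace n : subspace (ZLie L n).
Proof.
elim: n => [|n [h0 hA hZ]] /=.
  by split=> [//|x y -> ->|c x ->]; rewrite ?ladd0 ?lscale0r.
split=> [y|x y hx hy w|c x hx w]; first by rewrite lie0l.
- by rewrite lieDl; apply: hA.
- by rewrite lieZl; apply: hZ.
Qed.

Lemma ZLie_mono n x : ZLie L n x -> ZLie L n.+1 x.
Proof.
elim: n x => [|n IH] x /=; first by move=> -> y; rewrite lie0l.
by move=> h y; apply: IH.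
Qed.

Lemma ZLie_lie n x w : ZLie L n x -> ZLie L n (lie x w).
Proof.
case: n => [|n] /=; first by move=> ->; rewrite lie0l.
by move=> h y; apply: ZLie_mono.
Qed.

Lemma ZLie_ideal n : ideal (ZLie L n).
Proof.
split; first exact: ZLie_subspace.
case: n => [|n] x z /=; first by move=> ->; rewrite lbr0l lbr0r.
move=> hx.
have hS := ZLie_subspace n.
have h1 : forall a, ZLie L n (lie (lbr x z) a).
  move=> a; apply: (subspace_cancel (v := lie x (lbr a z)) hS
                      (ZLie_lie z (hx a)) (hx _)).
  by rewrite -lie_jac.
split=> //.
move=> a.
have hS1 := ZLie_subspace n.+1.
have : ZLie L n.+1 (lbr z x).
  apply: (subspace_cancel (v := lbr x z) hS1 (u := lie x z)) => //.
  - by move=> y; apply: ZLie_lie.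
  - by [].
Qed.

Lemma commIter_shift (y : nat -> L) k :
  commIter y k.+1 =
  commIter (fun i => if i == 0%N then lie (y 0%N) (y 1%N) else y i.+1) k.
Proof.
elim: k => [|k IH] //.
transitivity (lie (commIter y k.+1) (y k.+2)) => //.
by rewrite IH.
Qed.

Lemma ZChar n x :
  ZLie L n x <-> (forall y : nat -> L, y 0%N = x -> commIter y n = lzero).
Proof.
elim: n x => [|n IH] x.
  by split=> [/= -> y ->|h]; [|apply: (h (fun _ => x))].
split=> [h y e|h w].
  rewrite commIter_shift; apply: ((IH (lie x (y 1%N))).1 (h (y 1%N))).
  by rewrite /= e.
apply/(IH (lie x w)) => y' e'.
pose y := fun i => if i == 0%N then x else if i == 1%N then w else y' i.-1.
have := h y erefl; rewrite commIter_shift => <-.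
apply: commIter_ext => -[|i] _ //=.
Qed.

End Alg.

Section Homs.
Variable K : fieldType.

Definition WD (L : leibniz K) n := forall x x' : nat -> L,
  (forall i, (i <= n)%N -> ZLie L n (lsub (x i) (x' i))) -> commIter x n = commIter x' n.

Section H.
Variables (A B : leibniz K) (f : A -> B) (hf : is_hom f).
Lemma homD x y : f (ladd x y) = ladd (f x) (f y). Proof. by case: hf. Qed.
Lemma homZ c x : f (lscale c x) = lscale c (f x). Proof. by case: hf. Qed.
Lemma homB x y : f (lbr x y) = lbr (f x) (f y). Proof. by case: hf. Qed.
Lemma hom0 : f lzero = lzero.
Proof. by apply: (@ladd_cancel _ _ (f lzero)); rewrite -homD ladd0 ladd0r. Qed.
Lemma hom_lsub x y : f (lsub x y) = lsub (f x) (f y).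
Proof. by rewrite /lsub homD homZ. Qed.
Lemma hom_lie x y : f (lie x y) = lie (f x) (f y).
Proof. by rewrite /lie homD !homB. Qed.
Lemma hom_commIter (y : nat -> A) k : f (commIter y k) = commIter (fun i => f (y i)) k.
Proof. by elim: k => [|k IH] //=; rewrite hom_lie IH. Qed.
Lemma spanC_hom k c : spanC k c -> spanC k (f c).
Proof.
elim=> {c} [y||x y _ hx _ hy|a x _ hx].
- by rewrite hom_commIter; apply: spC_it.
- by rewrite hom0; apply: spC_0.
- by rewrite homD; apply: spC_add.
- by rewrite homZ; apply: spC_scale.
Qed.
Variables (sg : B -> A) (hs : forall b, f (sg b) = b).
Lemma spanC_image k d : spanC k d -> exists c, spanC k c /\ f c = d.
Proof.
elim=> {d} [y||x y _ [cx [hx ex]] _ [cy [hy ey]]|a x _ [cx [hx ex]]].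
- exists (commIter (fun i => sg (y i)) k); split; first exact: spC_it.
  by rewrite hom_commIter; apply: commIter_ext => i _; rewrite hs.
- by exists lzero; split; [apply: spC_0|apply: hom0].
- by exists (ladd cx cy); split; [apply: spC_add|rewrite homD ex ey].
- by exists (lscale a cx); split; [apply: spC_scale|rewrite homZ ex].
Qed.
Lemma ZLie_image n a : ZLie A n a -> ZLie B n (f a).
Proof.
elim: n a => [|n IH] a /=; first by move=> ->; apply: hom0.
by move=> h w; rewrite -(hs w) -hom_lie; apply: IH.
Qed.
End H.

Lemma hom_comp (A B C : leibniz K) (f : A -> B) (g : B -> C) :
  is_hom f -> is_hom g -> is_hom (fun x => g (f x)).
Proof. by move=> hf hg; split=> *; rewrite (homD hf, homZ hf, homB hf) (homD hg, homZ hg, homB hg). Qed.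

Lemma sval_hom (L : leibniz K) (S : L -> Prop) : is_hom (fun x : sub S => sval x).
Proof. by []. Qed.

Lemma fst_hom (A B : leibniz K) : is_hom (fun p : dsum A B => p.1).
Proof. by []. Qed.
Lemma snd_hom (A B : leibniz K) : is_hom (fun p : dsum A B => p.2).
Proof. by []. Qed.

Lemma qproj_hom (L : leibniz K) (I : L -> Prop) : is_hom (qproj I).
Proof.
by split=> *; rewrite /qproj /= ?qaddE ?qscaleE ?qbrE.
Qed.

Lemma qproj_eqP (L : leibniz K) (I : L -> Prop) x y :
  qproj I x = qproj I y <-> ideal_gen I (lsub x y).
Proof.
split; last by move=> h; apply: cls_eq.
move/(f_equal sval) => /= e.
have h : qcoset I x x := @eqm_refl _ _ I x.
by rewrite e in h; exact: h.
Qed.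

Lemma qproj_eq_ideal (L : leibniz K) (I : L -> Prop) x y : ideal I ->
  qproj I x = qproj I y <-> I (lsub x y).
Proof.
move=> hI; rewrite qproj_eqP; split; first exact: ideal_gen_id.
exact: ideal_gen_in.
Qed.

Lemma repZ (L : leibniz K) (I : L -> Prop) w : ideal I -> I (lsub (rep (cls I w)) w).
Proof. by move=> hI; apply: ideal_gen_id => //; apply: eqm_rep. Qed.

Lemma sub_tri (L : leibniz K) (S : L -> Prop) s y t : subspace S ->
  S (lsub s y) -> S (lsub s t) -> S (lsub y t).
Proof.
move=> hS h1 h2; rewrite -(lsub_trans y s t) -(lsub_opp s y).
by case: hS => _ hA hZ; apply: hA => //; apply: hZ.
Qed.

Lemma pullback_subalg (A B C : leibniz K) (f1 : A -> C) (f2 : B -> C) :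
  is_hom f1 -> is_hom f2 -> subalgebra (fun p : dsum A B => f1 p.1 = f2 p.2).
Proof.
move=> h1 h2; split; first split.
- by rewrite /= !hom0.
- by move=> p q hp hq /=; rewrite (homD h1) (homD h2) hp hq.
- by move=> c p hp /=; rewrite (homZ h1) (homZ h2) hp.
- by move=> p q hp hq /=; rewrite (homB h1) (homB h2) hp hq.
Qed.

End Homs.

Section Iso.
Variable K : fieldType.

Lemma FIT (A B : leibniz K) (Z : A -> Prop) (pi : A -> B) (sg : B -> A) :
  is_hom pi -> (forall b, pi (sg b) = b) ->
  (forall a, pi a = lzero <-> ideal_gen Z a) -> isomorphic B (quot Z).
Proof.
move=> hp hs hk.
have kq a a' : pi a = pi a' -> qproj Z a = qproj Z a'.
  by move=> e; apply/qproj_eqP; apply/hk; rewrite (hom_lsub hp) e lsubrr.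
exists (fun b => qproj Z (sg b)); split.
  split=> *; rewrite -?(homD (qproj_hom Z)) -?(homZ (qproj_hom Z))
     -?(homB (qproj_hom Z)); apply: kq;
     by rewrite ?(homD hp) ?(homZ hp) ?(homB hp) !hs.
exists (fun Y => pi (rep Y)).
- move=> b /=; rewrite -{2}(hs b); apply: lsub0; rewrite -(hom_lsub hp).
  by apply/hk; apply: eqm_rep.
- move=> Y /=; rewrite -{2}(repK Y); apply: (kq _ (rep Y)).
  by rewrite hs.
Qed.

Lemma ISO (A B : leibniz K) n (pi : A -> B) (sg : B -> A) :
  is_hom pi -> (forall b, pi (sg b) = b) ->
  (forall c, gamma_aux n c -> pi c = lzero -> c = lzero) ->
  WD A n -> n_lie_isoclinic n B A.
Proof.
move=> hp hs hk hwd.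
have gam_inj c c' : gamma_aux n c -> gamma_aux n c' -> pi c = pi c' -> c = c'.
  move=> hc hc' e; apply: lsub0; apply: hk.
    exact: (subspace_sub (gamma_subspace A n)).
  by rewrite (hom_lsub hp) e lsubrr.
have Zback a : ZLie B n (pi a) -> ZLie A n a.
  move=> h; apply/ZChar => y e.
  apply: hk; first exact: commIter_gamma.
  rewrite (hom_commIter hp); apply: ((ZChar n (pi a)).1 h (fun i => pi (y i))).
  by rewrite e.
have Zfwd a : ZLie A n a -> ZLie B n (pi a) by apply: ZLie_image.
have key a a' : ZLie B n (lsub (pi a) (pi a')) -> qproj (ZLie A n) a = qproj _ a'.
  move=> h; apply/(qproj_eq_ideal _ _ (ZLie_ideal A n)).
  by apply: Zback; rewrite (hom_lsub hp).
have pre' : forall d : sub (gammaLie B n.+1),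
    {c | gamma_aux n c /\ pi c = sval d}.
  move=> d; apply: constructive_indefinite_description.
  have := subalg_gen_id (gamma_subalg B n) (proj2_sig d) => /gamma_spanC.
  case/(spanC_image hp hs) => c [hc e].
  by exists c; split=> //; apply: spanC_gamma.
pose xi' (d : sub (gammaLie B n.+1)) : sub (gammaLie A n.+1) :=
  exist _ (sval (pre' d)) (subalg_gen_in (proj1 (proj2_sig (pre' d)))).
have xi'P d : gamma_aux n (sval (xi' d)) /\ pi (sval (xi' d)) = sval d.
  exact: (proj2_sig (pre' d)).
have gS (c : sub (gammaLie A n.+1)) : gamma_aux n (sval c).
  exact: (subalg_gen_id (gamma_subalg A n) (proj2_sig c)).
have gSB (c : sub (gammaLie B n.+1)) : gamma_aux n (sval c).
  exact: (subalg_gen_id (gamma_subalg B n) (proj2_sig c)).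
have [g0 gA gZ] := gamma_subspace A n.
have gBr := proj2 (gamma_subalg A n).
pose eta' (Y : quot (ZLie B n)) : quot (ZLie A n) := qproj (ZLie A n) (sg (rep Y)).
exists eta', xi'; split.
- split.
    split=> *; rewrite /eta' -?(homD (qproj_hom _)) -?(homZ (qproj_hom _))
       -?(homB (qproj_hom _)); apply: key;
       rewrite ?(homD hp) ?(homZ hp) ?(homB hp) !hs; exact: repZ (ZLie_ideal B n).
  exists (fun X => qproj (ZLie B n) (pi (rep X))).
  + move=> Y; rewrite /eta' -{2}(repK Y).
    apply/(qproj_eq_ideal _ _ (ZLie_ideal B n)).
    rewrite -{2}(hs (rep Y)) -(hom_lsub hp); apply: Zfwd.
    exact: repZ (ZLie_ideal A n).
  + move=> X; rewrite /eta' -{2}(repK X); apply: key.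
    rewrite hs; exact: repZ (ZLie_ideal B n).
- split.
    split=> [d d'|c d|d d']; apply: sinj; apply: gam_inj;
      rewrite /= ?(homD hp) ?(homZ hp) ?(homB hp) ?(proj2 (xi'P _)) //;
      try (apply: gA || apply: gZ || apply: gBr); try exact: (proj1 (xi'P _)).
  exists (fun c : sub (gammaLie A n.+1) =>
     (exist _ (pi (sval c)) (subalg_gen_in (spanC_gamma
        (spanC_hom hp (gamma_spanC (gS c))))) : sub (gammaLie B n.+1))).
  + by move=> d; apply: sinj => /=; rewrite (proj2 (xi'P d)).
  + move=> c; apply: sinj; apply: gam_inj; first exact: (proj1 (xi'P _)).
      exact: gS.
    by rewrite (proj2 (xi'P _)).
- move=> x y hxy c hc.
  have e1 : commIter y n = commIter (fun i => sg (x i)) n.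
    apply: hwd => i hi.
    apply: (sub_tri (ZLie_subspace A n) (s := sg (rep (cls _ (x i))))).
      by apply/(qproj_eq_ideal _ _ (ZLie_ideal A n)); apply: hxy.
    apply: Zback; rewrite (hom_lsub hp) !hs; exact: repZ (ZLie_ideal B n).
  rewrite e1; apply: gam_inj; first exact: (proj1 (xi'P _)).
    exact: commIter_gamma.
  rewrite (proj2 (xi'P _)) hc (hom_commIter hp).
  by apply: commIter_ext => i _; rewrite hs.
Qed.

End Iso.

Theorem mainTheorem7 (K : fieldType) (half_in_K : (2%:R : K) != 0)
  (n : nat) (g1 g2 : leibniz K)
  (eta : quot (ZLie g1 n) -> quot (ZLie g2 n))
  (xi : sub (gammaLie g1 n.+1) -> sub (gammaLie g2 n.+1))
  (Hiso : n_lie_isoclinism eta xi) :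
  let Kp : dsum g1 g2 -> Prop :=
    fun p => eta (qproj (ZLie g1 n) p.1) = qproj (ZLie g2 n) p.2 in
  let KA := sub Kp in
  let Z1 : KA -> Prop := fun p => exists g, ZLie g1 n g /\ sval p = (g, lzero) in
  let Z2 : KA -> Prop := fun p => exists h, ZLie g2 n h /\ sval p = (lzero, h) in
  [/\ (* (a) *)
      subalgebra Kp,
      (* (b) *)
      (forall x : dsum g1 g2,
         (exists p : KA, sval p = x /\ gammaLie KA n.+1 p) <->
         (exists g : sub (gammaLie g1 n.+1), x = (sval g, sval (xi g)))),
      (* (c) *)
      [/\ ideal Z1, ideal Z2,
          (forall p, Z1 p -> gammaLie KA n.+1 p -> p = lzero)
        & (forall p, Z2 p -> gammaLie KA n.+1 p -> p = lzero)]
    & (* (d) *)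
      [/\ isomorphic g1 (quot Z2), n_lie_isoclinic n (quot Z2) KA,
          isomorphic g2 (quot Z1) & n_lie_isoclinic n (quot Z1) KA]].
Proof.
move=> Kp KA Z1 Z2.
case: Hiso => [[etaH [etainv etaK etaK']] [xiH [xiinv xiK xiK']] Hc].
have KpS : subalgebra Kp :=
  pullback_subalg (hom_comp (qproj_hom _) etaH) (qproj_hom _).
have memKA (p : KA) : Kp (sval p) := subalg_gen_id KpS (proj2_sig p).
have P1 (g : g1) : Kp (g, rep (eta (qproj (ZLie g1 n) g))).
  by rewrite /Kp /= /qproj repK.
pose lift1 (g : g1) : KA := exist (subalg_gen Kp) _ (subalg_gen_in (P1 g)).
have P2 (h : g2) : Kp (rep (etainv (qproj (ZLie g2 n) h)), h).
  by rewrite /Kp /= /qproj repK etaK'.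
pose lift2 (h : g2) : KA := exist (subalg_gen Kp) _ (subalg_gen_in (P2 h)).
pose pi1 (p : KA) := (sval p).1.
pose pi2 (p : KA) := (sval p).2.
have pi1H : is_hom pi1 := hom_comp (sval_hom Kp) (fst_hom g1 g2).
have pi2H : is_hom pi2 := hom_comp (sval_hom Kp) (snd_hom g1 g2).
have hc (z : nat -> g1) : subalg_gen (gammaLie g1 n.+1) (commIter z n) :=
  subalg_gen_in (commIter_gamma z n).
have WD1 : WD g1 n.
  move=> x x' hx.
  pose y i := rep (eta (qproj (ZLie g1 n) (x i))).
  have hxy i : (i <= n)%N -> eta (qproj (ZLie g1 n) (x i)) = qproj (ZLie g2 n) (y i).
    by move=> _; rewrite /y /qproj repK.
  have hxy' i : (i <= n)%N -> eta (qproj (ZLie g1 n) (x' i)) = qproj (ZLie g2 n) (y i).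
    move=> hi; rewrite -hxy //; congr eta; apply/esym.
    by apply/(qproj_eq_ideal _ _ (ZLie_ideal g1 n)); apply: hx.
  have e1 := Hc x y hxy (exist _ _ (hc x)) erefl.
  have e2 := Hc x' y hxy' (exist _ _ (hc x')) erefl.
  have : xi (exist _ _ (hc x)) = xi (exist _ _ (hc x')).
    by apply: sinj; rewrite e1 e2.
  by move/(can_inj xiK)/(f_equal sval).
have WD2 : WD g2 n.
  move=> y y' hy.
  pose x i := rep (etainv (qproj (ZLie g2 n) (y i))).
  have hxy i : (i <= n)%N -> eta (qproj (ZLie g1 n) (x i)) = qproj (ZLie g2 n) (y i).
    by move=> _; rewrite /x /qproj repK etaK'.
  have hxy' i : (i <= n)%N -> eta (qproj (ZLie g1 n) (x i)) = qproj (ZLie g2 n) (y' i).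
    move=> hi; rewrite hxy //.
    by apply/(qproj_eq_ideal _ _ (ZLie_ideal g2 n)); apply: hy.
  have e1 := Hc x y hxy (exist _ _ (hc x)) erefl.
  have e2 := Hc x y' hxy' (exist _ _ (hc x)) erefl.
  by rewrite -e1 -e2.
have WDK : WD KA n.
  move=> P P' hP; apply: sinj.
  rewrite !(hom_commIter (sval_hom Kp)) [LHS]surjective_pairing [RHS]surjective_pairing.
  rewrite !(hom_commIter (fst_hom g1 g2)) !(hom_commIter (snd_hom g1 g2)).
  congr pair.
    apply: WD1 => i hi.
    have := ZLie_image pi1H (sg := lift1) (fun _ => erefl) (hP i hi).
    by rewrite (hom_lsub pi1H).
  apply: WD2 => i hi.
  have := ZLie_image pi2H (sg := lift2) (fun _ => erefl) (hP i hi).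
  by rewrite (hom_lsub pi2H).
have hb : forall x : dsum g1 g2,
         (exists p : KA, sval p = x /\ gammaLie KA n.+1 p) <->
         (exists g : sub (gammaLie g1 n.+1), x = (sval g, sval (xi g))).
  move=> x; split.
    case=> p [<- /= /gamma_spanC].
    elim=> {p} [P||p q _ [g eg] _ [g' eg']|c p _ [g eg]].
    - exists (exist _ _ (hc (fun i => (sval (P i)).1))).
      rewrite (hom_commIter (sval_hom Kp)) [LHS]surjective_pairing.
      rewrite (hom_commIter (fst_hom g1 g2)) (hom_commIter (snd_hom g1 g2)).
      congr pair.
      by rewrite (Hc _ (fun i => (sval (P i)).2) (fun i _ => memKA (P i)) (exist _ _ (hc (fun i => (sval (P i)).1))) erefl).
    - by exists (lzero : sub (gammaLie g1 n.+1)); rewrite (hom0 xiH).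
    - exists (ladd (g : sub (gammaLie g1 n.+1)) g'); rewrite (homD xiH).
      by rewrite [sval (ladd p q)]/= eg eg'.
    - exists (lscale c (g : sub (gammaLie g1 n.+1))); rewrite (homZ xiH).
      by rewrite [sval (lscale c p)]/= eg.
  case=> -[v hv] -> /=.
  suff: forall v, spanC n v -> forall hv : subalg_gen (gammaLie g1 n.+1) v,
      exists p : KA, sval p = (v, sval (xi (exist _ v hv))) /\ gamma_aux n p.
    by move=> /(_ v (gamma_spanC (subalg_gen_id (gamma_subalg g1 n) hv)) hv)
      [p [e hp]]; exists p.
  clear v hv; move=> v; elim=> {v} [y||a b sa IHa sb IHb|c a sa IHa] hv.
  - exists (commIter (fun i => lift1 (y i)) n); split; last exact: commIter_gamma.
    rewrite (hom_commIter (sval_hom Kp)) [LHS]surjective_pairing.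
    rewrite (hom_commIter (fst_hom g1 g2)) (hom_commIter (snd_hom g1 g2)).
    congr pair.
    rewrite (Hc y (fun i => rep (eta (qproj (ZLie g1 n) (y i))))) //.
    by move=> i _; rewrite /qproj repK.
  - exists lzero; split; last by case: (gamma_subspace KA n).
    have -> : exist _ lzero hv = (lzero : sub (gammaLie g1 n.+1)) by apply: sinj.
    by rewrite (hom0 xiH).
  - have ha := subalg_gen_in (spanC_gamma sa).
    have hb' := subalg_gen_in (spanC_gamma sb).
    have [pa [ea ga]] := IHa ha; have [pb [eb gb]] := IHb hb'.
    exists (ladd pa pb); split; last by case: (gamma_subspace KA n) => _ hA _; apply: hA.
    have -> : exist _ (ladd a b) hv = ladd (exist _ a ha : sub (gammaLie g1 n.+1)) (exist _ b hb') by apply: sinj.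
    by rewrite (homD xiH) [sval (ladd pa pb)]/= ea eb.
  - have ha := subalg_gen_in (spanC_gamma sa).
    have [pa [ea ga]] := IHa ha.
    exists (lscale c pa); split; last by case: (gamma_subspace KA n) => _ _ hZ; apply: hZ.
    have -> : exist _ (lscale c a) hv = lscale c (exist _ a ha : sub (gammaLie g1 n.+1)) by apply: sinj.
    by rewrite (homZ xiH) [sval (lscale c pa)]/= ea.
have [z10 z1A z1Z] := ZLie_subspace g1 n.
have [z20 z2A z2Z] := ZLie_subspace g2 n.
have [_ z1I] := ZLie_ideal g1 n.
have [_ z2I] := ZLie_ideal g2 n.
have Z1I : ideal Z1.
  split; first split.
  - by exists lzero.
  - move=> p q [g [hg ep]] [g' [hg' eq]]; exists (ladd g g'); split; first exact: z1A.
    by rewrite [sval (ladd p q)]/= ep eq /dadd /= ladd0.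
  - move=> c p [g [hg ep]]; exists (lscale c g); split; first exact: z1Z.
    by rewrite [sval (lscale c p)]/= ep /dscale /= lscale0r.
  - move=> p q [g [hg ep]]; case: (z1I g (sval q).1 hg) => h1 h2; split.
      by exists (lbr g (sval q).1); split=> //; rewrite [sval (lbr p q)]/= ep /dbr /= lbr0l.
    by exists (lbr (sval q).1 g); split=> //; rewrite [sval (lbr q p)]/= ep /dbr /= lbr0r.
have Z2I : ideal Z2.
  split; first split.
  - by exists lzero.
  - move=> p q [g [hg ep]] [g' [hg' eq]]; exists (ladd g g'); split; first exact: z2A.
    by rewrite [sval (ladd p q)]/= ep eq /dadd /= ladd0.
  - move=> c p [g [hg ep]]; exists (lscale c g); split; first exact: z2Z.
    by rewrite [sval (lscale c p)]/= ep /dscale /= lscale0r.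
  - move=> p q [g [hg ep]]; case: (z2I g (sval q).2 hg) => h1 h2; split.
      by exists (lbr g (sval q).2); split=> //; rewrite [sval (lbr p q)]/= ep /dbr /= lbr0l.
    by exists (lbr (sval q).2 g); split=> //; rewrite [sval (lbr q p)]/= ep /dbr /= lbr0r.
have Z1cap : forall p, Z1 p -> gammaLie KA n.+1 p -> p = lzero.
  move=> p [g [hg ep]] hp.
  have [g' eg'] := (hb (sval p)).1 (ex_intro _ p (conj erefl hp)).
  rewrite ep in eg'; case: eg' => e1 e2.
  have : xi g' = xi lzero by rewrite (hom0 xiH); apply: sinj; rewrite /= -e2.
  move/(can_inj xiK) => eg'0.
  by apply: sinj; rewrite ep e1 eg'0.
have Z2cap : forall p, Z2 p -> gammaLie KA n.+1 p -> p = lzero.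
  move=> p [h [hh ep]] hp.
  have [g' eg'] := (hb (sval p)).1 (ex_intro _ p (conj erefl hp)).
  rewrite ep in eg'; case: eg' => e1 e2.
  have eg'0 : g' = lzero by apply: sinj; rewrite /= -e1.
  by apply: sinj; rewrite ep e2 eg'0 (hom0 xiH).
split=> //; split.
- apply: (FIT (pi := pi1) (sg := lift1)) => // p; split.
    move=> e; apply: ideal_gen_in; exists (sval p).2; split.
      have := memKA p; rewrite /Kp.
      rewrite [(sval p).1]e (hom0 (qproj_hom _)) (hom0 etaH) => e'.
      have := (proj1 (qproj_eq_ideal _ _ (ZLie_ideal g2 n))) (esym e').
      by rewrite lsubr0.
    by rewrite [LHS]surjective_pairing [(sval p).1]e.
  by move/(ideal_gen_id Z2I) => [h [_ e]]; rewrite /pi1 e.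
- apply: (ISO (pi := qproj Z2) (sg := @rep _ _ Z2) (qproj_hom Z2) (@repK _ _ Z2)) => // c hc' e.
  rewrite -(hom0 (qproj_hom Z2)) in e.
  have := (proj1 (qproj_eq_ideal _ _ Z2I)) e; rewrite lsubr0 => hz.
  exact: Z2cap.
- apply: (FIT (pi := pi2) (sg := lift2)) => // p; split.
    move=> e; apply: ideal_gen_in; exists (sval p).1; split.
      have := memKA p; rewrite /Kp [(sval p).2]e (hom0 (qproj_hom _)) => e'.
      have e'' : eta (qproj (ZLie g1 n) (sval p).1) = eta (qproj (ZLie g1 n) lzero).
        by rewrite e' (hom0 (qproj_hom _)) (hom0 etaH).
      have := (proj1 (qproj_eq_ideal _ _ (ZLie_ideal g1 n))) (can_inj etaK e'').
      by rewrite lsubr0.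
    by rewrite [LHS]surjective_pairing [(sval p).2]e.
  by move/(ideal_gen_id Z1I) => [h [_ e]]; rewrite /pi2 e.
- apply: (ISO (pi := qproj Z1) (sg := @rep _ _ Z1) (qproj_hom Z1) (@repK _ _ Z1)) => // c hc' e.
  rewrite -(hom0 (qproj_hom Z1)) in e.
  have := (proj1 (qproj_eq_ideal _ _ Z1I)) e; rewrite lsubr0 => hz.
  exact: Z1cap.
Qed.
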